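(* Consider the iterates $\{x(t)\}$ of the asynchronous network Newton method described in the context, with stepsize $\varepsilon$ satisfying $$0<\varepsilon\le 2\left(\frac{\lambda}{\Lambda}\right)^2 .$$ Then, with probability $1$, the sequence $\{F(x(t))\}$ converges to the optimal value $F^*=\min_{x\in\mathbb{R}^n}F(x)$.
   Context: Setup. Let $n\ge 1$ be the number of agents and $\alpha>0$ a scalar. $W\in\mathbb{R}^{n\times n}$ is a symmetric nonnegative matrix with $W\mathbb{1}=\mathbb{1}$ (where $\mathbb{1}$ is the all-ones vector), $\mathrm{null}(I-W)=\mathrm{span}\{\mathbb{1}\}$, $0\le W_{ij}<1$ for all $i,j$, and $\delta\le W_{ii}\le\Delta$ for all $i$, for constants $0<\delta\le\Delta<1$. Each $f_i:\mathbb{R}\to\mathbb{R}$ is twice continuously differentiable with $0<m\le f_i''(s)\le M<\infty$ for all $s$ and $|f_i''(a)-f_i''(b)|\le L|a-b|$ for all $a,b$. Define $F(x)=\frac12 x^T(I-W)x+\alpha\sum_{i=1}^n f_i(x_i)$ for $x\in\mathbb{R}^n$, with minimum value $F^*$ and minimizer $x^*$. Let $g(x)=\nabla F(x)$, $G(x)=\mathrm{diag}(f_1''(x_1),\dots,f_n''(x_n))$, $H(x)=\nabla^2F(x)=I-W+\alpha G(x)$. Let $W_d$ be the diagonal matrix with $[W_d]_{ii}=W_{ii}$, and set $D(x)=\alpha G(x)+2(I-W_d)$ (diagonal, positive definite) and $B=I-2W_d+W$, so $H(x)=D(x)-B$. Define the approximate Hessian inverse $\hat H(x)^{-1}=D(x)^{-1/2}\big(I+D(x)^{-1/2}BD(x)^{-1/2}\big)D(x)^{-1/2}$.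 Constants: $\rho=\frac{2(1-\delta)}{2(1-\delta)+\alpha m}$, $\Lambda=\frac{1+\rho}{2(1-\Delta)+\alpha m}$, $\lambda=\frac{1}{2(1-\delta)+\alpha M}$. Algorithm (asynchronous network Newton). Given $x(0)\in\mathbb{R}^n$ and stepsize $\varepsilon>0$, let $\Phi(1),\Phi(2),\dots$ be i.i.d. random diagonal $n\times n$ matrices, each equal to $e_ie_i^T$ (the matrix with a single $1$ in position $(i,i)$ and zeros elsewhere) with probability $1/n$ for each $i=1,\dots,n$ (i.e., one uniformly random agent is active per iteration). The iterates are $x(t)=x(t-1)-\varepsilon\,\Phi(t)\hat H(x(t-1))^{-1}g(x(t-1))$, $t\ge1$. Write $g(t)=g(x(t))$, $D(t)=D(x(t))$, $H(t)=H(x(t))$, $\hat H(t)^{-1}=\hat H(x(t))^{-1}$. $\mathcal{F}_t$ denotes the $\sigma$-field generated by $\Phi(1),\dots,\Phi(t)$ (so $x(t)$ is $\mathcal{F}_t$-measurable). *)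

(* Defs.v *)
(* classical reals. Vectors in R^n are functions nat -> R
   (only indices 0..n-1 matter); matrices are nat -> nat -> R. *)
From Stdlib Require Import Reals Lra Arith List.
Open Scope R_scope.

Fixpoint rsum (n : nat) (f : nat -> R) : R :=
  match n with O => 0 | S k => rsum k f + f k end.

Definition kron (i j : nat) : R := if Nat.eqb i j then 1 else 0.

Definition lapl (n : nat) (W : nat -> nat -> R) (x : nat -> R) (i : nat) : R :=
  x i - rsum n (fun j => W i j * x j).

Definition Fobj (n : nat) (W : nat -> nat -> R) (alpha : R)
  (f : nat -> R -> R) (x : nat -> R) : R :=
  / 2 * rsum n (fun i => x i * lapl n W x i) + alpha * rsum n (fun i => f i (x i)).

Definition gradF (n : nat) (W : nat -> nat -> R) (alpha : R)
  (df : nat -> R -> R) (x : nat -> R) (i : nat) : R :=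
  lapl n W x i + alpha * df i (x i).

Definition Ddiag (W : nat -> nat -> R) (alpha : R) (d2f : nat -> R -> R)
  (x : nat -> R) (i : nat) : R :=
  alpha * d2f i (x i) + 2 * (1 - W i i).

Definition Bmat (W : nat -> nat -> R) (i j : nat) : R :=
  kron i j - 2 * kron i j * W i i + W i j.

Definition Hhatinv (W : nat -> nat -> R) (alpha : R) (d2f : nat -> R -> R)
  (x : nat -> R) (i j : nat) : R :=
  let si := / sqrt (Ddiag W alpha d2f x i) in
  let sj := / sqrt (Ddiag W alpha d2f x j) in
  si * (kron i j + si * Bmat W i j * sj) * sj.

Definition newton_dir (n : nat) (W : nat -> nat -> R) (alpha : R)
  (df d2f : nat -> R -> R) (x : nat -> R) (i : nat) : R :=
  rsum n (fun j => Hhatinv W alpha d2f x i j * gradF n W alpha df x j).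

Definition ann_step (n : nat) (W : nat -> nat -> R) (alpha eps : R)
  (df d2f : nat -> R -> R) (x : nat -> R) (a : nat) : nat -> R :=
  fun j => if Nat.eqb j a then x j - eps * newton_dir n W alpha df d2f x j else x j.

(* Iterates: omega k is the agent active at iteration t = k+1
   (i.e. Phi(k+1) = e_{omega k} e_{omega k}^T). *)
Fixpoint ann_iter (n : nat) (W : nat -> nat -> R) (alpha eps : R)
  (df d2f : nat -> R -> R) (x0 : nat -> R) (omega : nat -> nat) (t : nat)
  : nat -> R :=
  match t with
  | O => x0
  | S k => ann_step n W alpha eps df d2f (ann_iter n W alpha eps df d2f x0 omega k) (omega k)
  end.

(* Sample space: sequences of agents in {0,..,n-1}, with the i.i.d. uniform
   product measure. A cylinder is determined by a finite prefix s and has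
   measure (1/n)^(length s). *)
Definition in_cyl (s : list nat) (omega : nat -> nat) : Prop :=
  forall k, (k < length s)%nat -> omega k = nth k s O.

(* Null set of the uniform product measure on {0..n-1}^N: for every eps > 0
   it can be covered by countably many cylinders of total measure <= eps
   (outer measure zero). *)
Definition unif_null (n : nat) (A : (nat -> nat) -> Prop) : Prop :=
  forall e : R, 0 < e ->
    exists c : nat -> list nat,
      (forall omega, (forall k, (omega k < n)%nat) -> A omega ->
         exists k, in_cyl (c k) omega) /\
      (forall N, rsum N (fun k => (/ INR n) ^ length (c k)) <= e).

Definition almost_surely (n : nat) (P : (nat -> nat) -> Prop) : Prop :=
  unif_null n (fun omega => ~ P omega).

(* Main.v *)
Require Import Defs.
From Stdlib Require Import Reals Lra Lia Arith List Classical FunctionalExtensionality.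
Open Scope R_scope.

Lemma rsum_ext n f g : (forall i, (i < n)%nat -> f i = g i) -> rsum n f = rsum n g.
Proof. induction n; simpl; intros H; auto. rewrite IHn by (intros; apply H; lia). rewrite H by lia. auto. Qed.

Lemma rsum_le n f g : (forall i, (i < n)%nat -> f i <= g i) -> rsum n f <= rsum n g.
Proof. induction n; simpl; intros H; [lra|]. pose proof (IHn (fun i Hi => H i ltac:(lia))). pose proof (H n ltac:(lia)). lra. Qed.

Lemma rsum_nonneg n f : (forall i, (i < n)%nat -> 0 <= f i) -> 0 <= rsum n f.
Proof. intros H. replace 0 with (rsum n (fun _ => 0)). apply rsum_le; auto.
induction n; simpl; auto. rewrite IHn; [lra| intros; apply H; lia]. Qed.

Lemma rsum_zero n : rsum n (fun _ => 0) = 0.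
Proof. induction n; simpl; auto. rewrite IHn; lra. Qed.

Lemma rsum_plus n f g : rsum n (fun i => f i + g i) = rsum n f + rsum n g.
Proof. induction n; simpl; [lra|]. rewrite IHn; lra. Qed.

Lemma rsum_minus n f g : rsum n (fun i => f i - g i) = rsum n f - rsum n g.
Proof. induction n; simpl; [lra|]. rewrite IHn; lra. Qed.

Lemma rsum_scal n c f : rsum n (fun i => c * f i) = c * rsum n f.
Proof. induction n; simpl; [lra|]. rewrite IHn; lra. Qed.

Lemma rsum_scalr n c f : rsum n (fun i => f i * c) = rsum n f * c.
Proof. induction n; simpl; [lra|]. rewrite IHn; lra. Qed.

Lemma rsum_swap n m (f : nat -> nat -> R) :
  rsum n (fun i => rsum m (fun j => f i j)) = rsum m (fun j => rsum n (fun i => f i j)).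
Proof. induction n; simpl. rewrite rsum_zero; auto. rewrite IHn, <- rsum_plus. auto. Qed.

Lemma rsum_single n a (c : R) : (a < n)%nat ->
  rsum n (fun j => if Nat.eqb j a then c else 0) = c.
Proof. induction n; simpl; intros H; [lia|].
 destruct (Nat.eqb n a) eqn:E.
 - apply Nat.eqb_eq in E; subst. rewrite (rsum_ext _ _ (fun _ => 0)), rsum_zero; [lra|].
   intros i Hi. destruct (Nat.eqb i a) eqn:E2; auto. apply Nat.eqb_eq in E2; lia.
 - apply Nat.eqb_neq in E. rewrite IHn by lia. lra. Qed.

Lemma rsum_kron n a h : (a < n)%nat -> rsum n (fun j => kron a j * h j) = h a.
Proof. intros H. rewrite <- (rsum_single n a (h a) H). apply rsum_ext. intros i Hi.
 unfold kron. rewrite (Nat.eqb_sym a i). destruct (Nat.eqb i a) eqn:E.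
 apply Nat.eqb_eq in E; subst; lra. lra. Qed.

Lemma rsum_ge_term n f a : (a < n)%nat -> (forall i, (i < n)%nat -> 0 <= f i) -> f a <= rsum n f.
Proof. induction n; simpl; intros Ha H; [lia|].
 destruct (Nat.eq_dec a n). subst. pose proof (rsum_nonneg n f (fun i Hi => H i ltac:(lia))). lra.
 pose proof (IHn ltac:(lia) (fun i Hi => H i ltac:(lia))). pose proof (H n ltac:(lia)). lra. Qed.

Lemma rsum_add a b f : rsum (a + b) f = rsum a f + rsum b (fun j => f (a + j)%nat).
Proof. induction b; simpl. rewrite Nat.add_0_r; lra. rewrite Nat.add_succ_r; simpl. rewrite IHb; lra. Qed.

Lemma rsum_mul a b f : rsum (a * b) f = rsum a (fun i => rsum b (fun j => f (i * b + j)%nat)).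
Proof. induction a; simpl; auto. rewrite Nat.add_comm, rsum_add, IHa. auto. Qed.

Lemma cs_weighted n Q g : (forall j, (j < n)%nat -> 0 <= Q j) ->
  (rsum n (fun j => Q j * g j)) ^ 2 <= rsum n Q * rsum n (fun j => Q j * g j ^ 2).
Proof. intros HQ.
 set (S := rsum n Q). set (A := rsum n (fun j => Q j * g j ^ 2)). set (B := rsum n (fun j => Q j * g j)).
 assert (H : 0 <= rsum n (fun i => rsum n (fun j => Q i * Q j * (g i - g j) ^ 2))).
 { apply rsum_nonneg; intros; apply rsum_nonneg; intros. pose proof (HQ i H). pose proof (HQ i0 H0).
   apply Rmult_le_pos; [apply Rmult_le_pos; auto | apply pow2_ge_0]. }
 assert (E : rsum n (fun i => rsum n (fun j => Q i * Q j * (g i - g j) ^ 2)) = 2 * (S * A - B ^ 2)).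
 { rewrite (rsum_ext _ _ (fun i => Q i * g i ^ 2 * S - 2 * (Q i * g i) * B + Q i * A)).
   rewrite rsum_plus, rsum_minus, !rsum_scalr, rsum_scal. unfold S, A, B. simpl. ring.
   intros i Hi. unfold S, A, B. rewrite <- !rsum_scal. rewrite <- rsum_minus, <- rsum_plus.
   apply rsum_ext; intros; ring. }
 lra. Qed.

Lemma rsum_const n c : rsum n (fun _ => c) = INR n * c.
Proof. induction n. simpl; ring. cbn [rsum]. rewrite IHn, S_INR. ring. Qed.

Lemma schur n (Q : nat -> nat -> R) (Rb : R) g :
  (forall i j, (i < n)%nat -> (j < n)%nat -> 0 <= Q i j) ->
  (forall i j, (i < n)%nat -> (j < n)%nat -> Q i j = Q j i) ->
  (forall i, (i < n)%nat -> rsum n (Q i) <= Rb) ->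
  rsum n (fun a => (rsum n (fun j => Q a j * g j)) ^ 2) <= Rb ^ 2 * rsum n (fun j => g j ^ 2).
Proof. intros Hn Hs Hr.
 destruct n as [|n']; [simpl; lra|]. set (n := S n') in *.
 assert (HR : 0 <= Rb). { pose proof (Hr O ltac:(unfold n; lia)). pose proof (rsum_nonneg n (Q O) (fun j Hj => Hn O j ltac:(unfold n; lia) Hj)). lra. }
 apply Rle_trans with (rsum n (fun a => Rb * rsum n (fun j => Q a j * g j ^ 2))).
 { apply rsum_le; intros a Ha. eapply Rle_trans. apply cs_weighted. intros; auto.
   apply Rmult_le_compat_r. apply rsum_nonneg; intros; pose proof (Hn a i Ha H); pose proof (pow2_ge_0 (g i)); nra.
   apply Hr; auto. }
 rewrite rsum_scal, rsum_swap.
 replace (Rb ^ 2 * rsum n (fun j => g j ^ 2)) with (Rb * rsum n (fun j => g j ^ 2 * Rb)) by (rewrite rsum_scalr; ring).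
 apply Rmult_le_compat_l; auto. apply rsum_le; intros j Hj.
 rewrite (rsum_ext _ _ (fun i => g j ^ 2 * Q j i)). rewrite rsum_scal. apply Rmult_le_compat_l. apply pow2_ge_0. auto.
 intros i Hi. rewrite Hs; auto; ring. Qed.

Lemma wquad n (W : nat -> nat -> R) u s :
  (forall i j, (i < n)%nat -> (j < n)%nat -> W i j = W j i) ->
  (forall i, (i < n)%nat -> rsum n (fun j => W i j) = 1) ->
  rsum n (fun a => rsum n (fun j => W a j * (u a + s * u j) ^ 2)) =
  (1 + s ^ 2) * rsum n (fun a => u a ^ 2) + 2 * s * rsum n (fun a => rsum n (fun j => W a j * u a * u j)).
Proof. intros Hs Hr.
 rewrite (rsum_ext _ _ (fun a => (u a ^ 2 * rsum n (fun j => W a j)) + 2 * s * rsum n (fun j => W a j * u a * u j) + s ^ 2 * rsum n (fun j => W a j * u j ^ 2))).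
 2:{ intros a Ha. rewrite <- !rsum_scal, <- !rsum_plus. apply rsum_ext; intros; ring. }
 rewrite !rsum_plus, rsum_scal, (rsum_scal n (s^2)).
 rewrite (rsum_swap n n (fun i j => W i j * u j ^ 2)).
 rewrite (rsum_ext _ (fun j => rsum n (fun i => W i j * u j ^ 2)) (fun j => u j ^ 2)).
 rewrite (rsum_ext _ (fun a => u a ^ 2 * rsum n (fun j => W a j)) (fun a => u a ^ 2)). ring.
 intros; rewrite Hr; auto; ring.
 intros j Hj. rewrite rsum_scalr, (rsum_ext _ _ (W j)).
 rewrite Hr by auto. ring. intros; apply Hs; auto. Qed.

Lemma wquad_lower n (W : nat -> nat -> R) u :
  (forall i j, (i < n)%nat -> (j < n)%nat -> W i j = W j i) ->
  (forall i j, (i < n)%nat -> (j < n)%nat -> 0 <= W i j) ->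
  (forall i, (i < n)%nat -> rsum n (fun j => W i j) = 1) ->
  rsum n (fun a => (2 * W a a - 1) * u a ^ 2) <= rsum n (fun a => rsum n (fun j => W a j * u a * u j)).
Proof. intros Hs Hp Hr. pose proof (wquad n W u 1 Hs Hr) as E.
 assert (rsum n (fun a => W a a * (u a + 1 * u a) ^ 2) <= rsum n (fun a => rsum n (fun j => W a j * (u a + 1 * u j) ^ 2))).
 { apply rsum_le; intros a Ha. apply (rsum_ge_term n (fun j => W a j * (u a + 1 * u j) ^ 2) a Ha).
   intros; apply Rmult_le_pos; auto; apply pow2_ge_0. }
 rewrite (rsum_ext _ (fun a => W a a * (u a + 1 * u a) ^ 2) (fun a => 4 * (W a a * u a ^ 2))) in H by (intros; ring).
 rewrite rsum_scal in H.
 rewrite (rsum_ext _ _ (fun a => 2 * (W a a * u a ^ 2) - u a ^ 2)), rsum_minus, rsum_scal by (intros; ring).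
 lra. Qed.

Lemma wquad_upper n (W : nat -> nat -> R) u :
  (forall i j, (i < n)%nat -> (j < n)%nat -> W i j = W j i) ->
  (forall i j, (i < n)%nat -> (j < n)%nat -> 0 <= W i j) ->
  (forall i, (i < n)%nat -> rsum n (fun j => W i j) = 1) ->
  rsum n (fun a => rsum n (fun j => W a j * u a * u j)) <= rsum n (fun a => u a ^ 2).
Proof. intros Hs Hp Hr. pose proof (wquad n W u (-1) Hs Hr) as E.
 assert (0 <= rsum n (fun a => rsum n (fun j => W a j * (u a + -1 * u j) ^ 2))).
 { apply rsum_nonneg; intros; apply rsum_nonneg; intros; apply Rmult_le_pos; auto; apply pow2_ge_0. }
 lra. Qed.

Lemma mono_dec g g' a b : (forall t, derivable_pt_lim g t (g' t)) ->
  (forall t, a < t < b -> g' t <= 0) -> a <= b -> g b <= g a.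
Proof. intros Hd Hs Hab. destruct (Req_dec a b) as [E|E]. subst; lra.
 set (pr := fun t => exist (fun l => derivable_pt_abs g t l) (g' t) (Hd t) : derivable_pt g t).
 destruct (MVT_cor1 g a b pr ltac:(lra)) as [c [Hc Hc2]].
 rewrite (derive_pt_eq_0 g c (g' c) (pr c) (Hd c)) in Hc. pose proof (Hs c Hc2). nra. Qed.

Lemma mono_inc g g' a b : (forall t, derivable_pt_lim g t (g' t)) ->
  (forall t, a < t < b -> 0 <= g' t) -> a <= b -> g a <= g b.
Proof. intros Hd Hs Hab.
 assert (H : forall t, derivable_pt_lim (fun s => - g s) t (- g' t)).
 { intros t. apply (derivable_pt_lim_opp g t (g' t)), Hd. }
 pose proof (mono_dec _ _ a b H ltac:(intros t Ht; pose proof (Hs t Ht); lra) Hab). lra. Qed.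

Lemma taylor_up f df d2f hi x y :
  (forall s, derivable_pt_lim f s (df s)) -> (forall s, derivable_pt_lim df s (d2f s)) ->
  (forall s, d2f s <= hi) ->
  f y <= f x + df x * (y - x) + hi / 2 * (y - x) ^ 2.
Proof. intros Hf Hdf Hb.
 set (psi := fun t => df t - df x - hi * (t - x)).
 assert (Hpsi : forall t, derivable_pt_lim psi t (d2f t - hi)).
 { intros t. unfold psi.
   replace (d2f t - hi) with (d2f t - 0 - hi * (1 - 0)) by ring.
   apply (derivable_pt_lim_minus (fun t => df t - df x) (fun t => hi * (t - x))).
   apply (derivable_pt_lim_minus df (fun _ => df x)). auto. apply derivable_pt_lim_const.
   apply (derivable_pt_lim_scal (fun t => t - x)).
   apply (derivable_pt_lim_minus id (fun _ => x)). apply derivable_pt_lim_id. apply derivable_pt_lim_const. }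
 set (phi := fun t => f t - f x - df x * (t - x) - hi / 2 * ((t - x) * (t - x))).
 assert (Hphi : forall t, derivable_pt_lim phi t (psi t)).
 { intros t. unfold phi, psi.
   replace (df t - df x - hi * (t - x)) with (df t - 0 - df x * (1 - 0) - hi/2 * ((1 - 0) * (t - x) + (t - x) * (1 - 0))) by field.
   apply (derivable_pt_lim_minus (fun t => f t - f x - df x * (t - x)) (fun t => hi / 2 * ((t - x) * (t - x)))).
   apply (derivable_pt_lim_minus (fun t => f t - f x) (fun t => df x * (t - x))).
   apply (derivable_pt_lim_minus f (fun _ => f x)). auto. apply derivable_pt_lim_const.
   apply (derivable_pt_lim_scal (fun t => t - x)).
   apply (derivable_pt_lim_minus id (fun _ => x)). apply derivable_pt_lim_id. apply derivable_pt_lim_const.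
   apply (derivable_pt_lim_scal (fun t => (t - x) * (t - x))).
   apply (derivable_pt_lim_mult (fun t => t - x) (fun t => t - x));
   apply (derivable_pt_lim_minus id (fun _ => x)); try apply derivable_pt_lim_id; apply derivable_pt_lim_const. }
 assert (Hx : phi x = 0) by (unfold phi; ring).
 assert (Hpx : psi x = 0) by (unfold psi; ring).
 assert (phi y <= 0).
 { destruct (Rle_dec x y).
   - rewrite <- Hx. apply (mono_dec phi psi x y Hphi); auto. intros t Ht.
     rewrite <- Hpx. apply (mono_dec psi (fun t => d2f t - hi) x t Hpsi). intros; pose proof (Hb t0); lra. lra.
   - rewrite <- Hx. apply (mono_inc phi psi y x Hphi); [|lra]. intros t Ht.
     rewrite <- Hpx. apply (mono_dec psi (fun t => d2f t - hi) t x Hpsi). intros; pose proof (Hb t0); lra. lra. }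
 unfold phi in H. lra. Qed.

Lemma taylor_low f df d2f lo x y :
  (forall s, derivable_pt_lim f s (df s)) -> (forall s, derivable_pt_lim df s (d2f s)) ->
  (forall s, lo <= d2f s) ->
  f x + df x * (y - x) + lo / 2 * (y - x) ^ 2 <= f y.
Proof. intros Hf Hdf Hb.
 pose proof (taylor_up (fun s => - f s) (fun s => - df s) (fun s => - d2f s) (- lo) x y
   (fun s => derivable_pt_lim_opp f s (df s) (Hf s)) (fun s => derivable_pt_lim_opp df s (d2f s) (Hdf s))
   ltac:(intros s; pose proof (Hb s); lra)).
 simpl in H. lra. Qed.

Definition Lform n W (x y : nat -> R) := rsum n (fun i => x i * lapl n W y i).

Lemma lapl_add n W x h y i : (forall j, (j < n)%nat -> y j = x j + h j) -> (i < n)%nat ->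
  lapl n W y i = lapl n W x i + lapl n W h i.
Proof. intros Hy Hi. unfold lapl. rewrite Hy by auto.
 rewrite (rsum_ext _ (fun j => W i j * y j) (fun j => W i j * x j + W i j * h j)), rsum_plus. ring.
 intros; rewrite Hy; auto; ring. Qed.

Lemma Lform_sym n W x y : (forall i j, (i < n)%nat -> (j < n)%nat -> W i j = W j i) ->
  Lform n W x y = Lform n W y x.
Proof. intros Hs. unfold Lform, lapl.
 rewrite (rsum_ext _ _ (fun i => x i * y i - rsum n (fun j => W i j * x i * y j))).
 rewrite (rsum_ext _ (fun i => y i * _) (fun i => y i * x i - rsum n (fun j => W i j * y i * x j))).
 rewrite !rsum_minus, rsum_swap. f_equal. apply rsum_ext; intros; ring.
 apply rsum_ext; intros i Hi; apply rsum_ext; intros j Hj. rewrite Hs; auto; ring.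
 intros. rewrite Rmult_minus_distr_l, <- rsum_scal. f_equal. apply rsum_ext; intros; ring.
 intros. rewrite Rmult_minus_distr_l, <- rsum_scal. f_equal. apply rsum_ext; intros; ring. Qed.

Lemma Lform_nonneg n W h :
  (forall i j, (i < n)%nat -> (j < n)%nat -> W i j = W j i) ->
  (forall i j, (i < n)%nat -> (j < n)%nat -> 0 <= W i j) ->
  (forall i, (i < n)%nat -> rsum n (fun j => W i j) = 1) ->
  0 <= Lform n W h h.
Proof. intros Hs Hp Hr. pose proof (wquad_upper n W h Hs Hp Hr). unfold Lform, lapl.
 rewrite (rsum_ext _ _ (fun i => h i ^ 2 - rsum n (fun j => W i j * h i * h j))), rsum_minus. lra.
 intros. rewrite Rmult_minus_distr_l, <- rsum_scal. f_equal. ring. apply rsum_ext; intros; ring. Qed.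

Lemma Fexp n W alpha f x y h :
  (forall i j, (i < n)%nat -> (j < n)%nat -> W i j = W j i) ->
  (forall j, (j < n)%nat -> y j = x j + h j) ->
  Fobj n W alpha f y = Fobj n W alpha f x + rsum n (fun i => h i * lapl n W x i) + / 2 * Lform n W h h
     + alpha * rsum n (fun i => f i (y i) - f i (x i)).
Proof. intros Hs Hy. unfold Fobj. rewrite rsum_minus.
 assert (E : rsum n (fun i => y i * lapl n W y i) = rsum n (fun i => x i * lapl n W x i) + rsum n (fun i => x i * lapl n W h i) + rsum n (fun i => h i * lapl n W x i) + Lform n W h h).
 { unfold Lform. rewrite <- !rsum_plus. apply rsum_ext; intros i Hi. rewrite (lapl_add n W x h y i Hy Hi), Hy by auto. ring. }
 rewrite E. pose proof (Lform_sym n W x h Hs) as E2. unfold Lform in *. rewrite E2. field. Qed.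

Lemma strong_conv n W alpha f df d2f m x y :
  (forall i j, (i < n)%nat -> (j < n)%nat -> W i j = W j i) ->
  (forall i j, (i < n)%nat -> (j < n)%nat -> 0 <= W i j) ->
  (forall i, (i < n)%nat -> rsum n (fun j => W i j) = 1) ->
  0 < alpha ->
  (forall i s, (i < n)%nat -> derivable_pt_lim (f i) s (df i s)) ->
  (forall i s, (i < n)%nat -> derivable_pt_lim (df i) s (d2f i s)) ->
  (forall i s, (i < n)%nat -> m <= d2f i s) ->
  Fobj n W alpha f x + rsum n (fun i => gradF n W alpha df x i * (y i - x i) + alpha * m / 2 * (y i - x i) ^ 2)
    <= Fobj n W alpha f y.
Proof. intros Hs Hp Hr Ha Hf Hdf Hm.
 rewrite (Fexp n W alpha f x y (fun i => y i - x i) Hs) by (intros; ring).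
 pose proof (Lform_nonneg n W (fun i => y i - x i) Hs Hp Hr).
 assert (rsum n (fun i => df i (x i) * (y i - x i) + m / 2 * (y i - x i) ^ 2) <= rsum n (fun i => f i (y i) - f i (x i))).
 { apply rsum_le; intros i Hi. pose proof (taylor_low (f i) (df i) (d2f i) m (x i) (y i) (fun s => Hf i s Hi) (fun s => Hdf i s Hi) (fun s => Hm i s Hi)). lra. }
 unfold gradF. rewrite (rsum_ext _ _ (fun i => (y i - x i) * lapl n W x i + alpha * (df i (x i) * (y i - x i) + m / 2 * (y i - x i) ^ 2))) by (intros; field).
 rewrite rsum_plus, rsum_scal. nra. Qed.

Lemma PL n W alpha f df d2f m x xs :
  (forall i j, (i < n)%nat -> (j < n)%nat -> W i j = W j i) ->
  (forall i j, (i < n)%nat -> (j < n)%nat -> 0 <= W i j) ->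
  (forall i, (i < n)%nat -> rsum n (fun j => W i j) = 1) ->
  0 < alpha -> 0 < m ->
  (forall i s, (i < n)%nat -> derivable_pt_lim (f i) s (df i s)) ->
  (forall i s, (i < n)%nat -> derivable_pt_lim (df i) s (d2f i s)) ->
  (forall i s, (i < n)%nat -> m <= d2f i s) ->
  Fobj n W alpha f x - Fobj n W alpha f xs <= / (2 * (alpha * m)) * rsum n (fun i => gradF n W alpha df x i ^ 2).
Proof. intros Hs Hp Hr Ha Hm0 Hf Hdf Hm.
 pose proof (strong_conv n W alpha f df d2f m x xs Hs Hp Hr Ha Hf Hdf Hm).
 assert (- (/ (2 * (alpha * m)) * rsum n (fun i => gradF n W alpha df x i ^ 2)) <=
   rsum n (fun i => gradF n W alpha df x i * (xs i - x i) + alpha * m / 2 * (xs i - x i) ^ 2)).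
 { rewrite <- rsum_scal. rewrite <- (Rmult_1_l (rsum _ _)) at 1. replace (-1) with (-1) by ring.
   rewrite Ropp_mult_distr_l, <- rsum_scal. rewrite <- (Rmult_1_l (rsum _ (fun i => _ * _ + _))).
   rewrite <- rsum_scal. apply rsum_le; intros i Hi.
   set (g := gradF n W alpha df x i). set (h := xs i - x i). set (c := alpha * m).
   assert (0 < c) by (unfold c; nra).
   assert (0 <= (c * h + g) ^ 2) by apply pow2_ge_0.
   replace (- 1 * (/ (2 * c) * g ^ 2)) with (- (g ^ 2 / (2 * c))) by (field; lra).
   replace (1 * (g * h + c / 2 * h ^ 2)) with ((c * h + g) ^ 2 / (2 * c) - g ^ 2 / (2 * c)) by (field; lra).
   assert (0 <= (c * h + g) ^ 2 / (2 * c)) by (unfold Rdiv; apply Rmult_le_pos; [lra | apply Rlt_le, Rinv_0_lt_compat; lra]). lra. }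
 lra. Qed.

Lemma single_ext n a (F : nat -> R) (c : R) : (a < n)%nat ->
  (forall i, (i < n)%nat -> F i = if Nat.eqb i a then c else 0) -> rsum n F = c.
Proof. intros Ha H. rewrite (rsum_ext _ _ _ H). apply rsum_single; auto. Qed.

Lemma step_bound n W alpha eps f df d2f M x a :
  (forall i j, (i < n)%nat -> (j < n)%nat -> W i j = W j i) ->
  0 < alpha ->
  (forall i s, (i < n)%nat -> derivable_pt_lim (f i) s (df i s)) ->
  (forall i s, (i < n)%nat -> derivable_pt_lim (df i) s (d2f i s)) ->
  (forall i s, (i < n)%nat -> d2f i s <= M) ->
  (a < n)%nat ->
  let d := newton_dir n W alpha df d2f x a in
  Fobj n W alpha f (ann_step n W alpha eps df d2f x a) <=
  Fobj n W alpha f x - eps * d * gradF n W alpha df x a + eps ^ 2 * d ^ 2 * (1 - W a a + alpha * M) / 2.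
Proof. intros Hs Ha Hf Hdf HM Han d.
 set (c0 := - eps * d).
 set (h := fun i => if Nat.eqb i a then c0 else 0).
 assert (Hy : forall j, (j < n)%nat -> ann_step n W alpha eps df d2f x a j = x j + h j).
 { intros j Hj. unfold ann_step, h. destruct (Nat.eqb j a) eqn:E. apply Nat.eqb_eq in E; subst. unfold c0, d. ring. ring. }
 rewrite (Fexp n W alpha f x _ h Hs Hy).
 rewrite (single_ext n a _ (c0 * lapl n W x a) Han).
 2:{ intros i Hi. unfold h. destruct (Nat.eqb i a) eqn:E. apply Nat.eqb_eq in E; subst; auto. ring. }
 assert (Hl : lapl n W h a = c0 - W a a * c0).
 { unfold lapl. rewrite (single_ext n a _ (W a a * c0) Han). unfold h; rewrite Nat.eqb_refl; auto.
   intros i Hi. unfold h. destruct (Nat.eqb i a) eqn:E. apply Nat.eqb_eq in E; subst; auto. ring. }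
 unfold Lform. rewrite (single_ext n a _ (c0 * (c0 - W a a * c0)) Han).
 2:{ intros i Hi. unfold h at 1. destruct (Nat.eqb i a) eqn:E. apply Nat.eqb_eq in E; subst; rewrite Hl; auto. ring. }
 rewrite (single_ext n a _ (f a (x a + c0) - f a (x a)) Han).
 2:{ intros i Hi. rewrite Hy by auto. unfold h. destruct (Nat.eqb i a) eqn:E. apply Nat.eqb_eq in E; subst; auto. rewrite Rplus_0_r; ring. }
 pose proof (taylor_up (f a) (df a) (d2f a) M (x a) (x a + c0) (fun s => Hf a s Han) (fun s => Hdf a s Han) (fun s => HM a s Han)).
 unfold gradF. unfold c0 in *.
 replace (x a + - eps * d - x a) with (- eps * d) in H by ring.
 assert (alpha * (f a (x a + - eps * d) - f a (x a)) <= alpha * (df a (x a) * (- eps * d) + M / 2 * (- eps * d) ^ 2)).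
 { apply Rmult_le_compat_l; lra. }
 nra. Qed.

Lemma inv_sqrt_sq z : 0 < z -> / sqrt z * / sqrt z = / z.
Proof. intros H. rewrite <- Rinv_mult, sqrt_sqrt; lra. Qed.

Lemma Hhat_eq W alpha d2f x i j :
  0 < Ddiag W alpha d2f x i -> 0 < Ddiag W alpha d2f x j ->
  Hhatinv W alpha d2f x i j = kron i j * / Ddiag W alpha d2f x i
     + Bmat W i j * (/ Ddiag W alpha d2f x i * / Ddiag W alpha d2f x j).
Proof. intros Hi Hj. unfold Hhatinv. cbv zeta.
 rewrite <- (inv_sqrt_sq _ Hi), <- (inv_sqrt_sq _ Hj).
 unfold kron. destruct (Nat.eqb i j) eqn:E. apply Nat.eqb_eq in E; subst. ring. ring. Qed.

Lemma Bmat_eq W i j : Bmat W i j = kron i j * (1 - 2 * W i i) + W i j.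
Proof. unfold Bmat. ring. Qed.

Lemma kron_sym i j : kron i j = kron j i.
Proof. unfold kron. rewrite Nat.eqb_sym. auto. Qed.

Lemma kron_nonneg i j : 0 <= kron i j.
Proof. unfold kron. destruct (Nat.eqb i j); lra. Qed.

Lemma Bmat_nonneg W i j : 0 <= W i j -> W i i < 1 -> 0 <= Bmat W i j.
Proof. intros H1 H2. unfold Bmat, kron. destruct (Nat.eqb i j) eqn:E. apply Nat.eqb_eq in E; subst. lra. lra. Qed.

Lemma Bmat_rowsum n W i : (i < n)%nat -> rsum n (fun j => W i j) = 1 ->
  rsum n (fun j => Bmat W i j) = 2 * (1 - W i i).
Proof. intros Hi Hr. rewrite (rsum_ext _ _ (fun j => kron i j * (1 - 2 * W i i) + W i j)) by (intros; apply Bmat_eq).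
 rewrite rsum_plus, rsum_kron by auto. change (rsum n (W i)) with (rsum n (fun j => W i j)). rewrite Hr. ring. Qed.

Lemma Bmat_psd n W u :
  (forall i j, (i < n)%nat -> (j < n)%nat -> W i j = W j i) ->
  (forall i j, (i < n)%nat -> (j < n)%nat -> 0 <= W i j) ->
  (forall i, (i < n)%nat -> rsum n (fun j => W i j) = 1) ->
  0 <= rsum n (fun a => rsum n (fun j => Bmat W a j * u a * u j)).
Proof. intros Hs Hp Hr. pose proof (wquad_lower n W u Hs Hp Hr).
 rewrite (rsum_ext _ _ (fun a => (1 - 2 * W a a) * u a ^ 2 + rsum n (fun j => W a j * u a * u j))), rsum_plus.
 rewrite (rsum_ext _ (fun a => (1 - 2 * W a a) * u a ^ 2) (fun a => - ((2 * W a a - 1) * u a ^ 2))) by (intros; ring).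
 replace (rsum n (fun a => - ((2 * W a a - 1) * u a ^ 2))) with (- rsum n (fun a => (2 * W a a - 1) * u a ^ 2)). lra.
 rewrite <- (Rmult_1_l (rsum _ _)), Ropp_mult_distr_l, <- rsum_scal. apply rsum_ext; intros; ring.
 intros a Ha. rewrite (rsum_ext _ _ (fun j => kron a j * ((1 - 2 * W a a) * u a * u j) + W a j * u a * u j)), rsum_plus, rsum_kron; auto. ring.
 intros; rewrite Bmat_eq; ring. Qed.

Lemma dir_lower n W alpha d2f x g Dmax :
  (forall i j, (i < n)%nat -> (j < n)%nat -> W i j = W j i) ->
  (forall i j, (i < n)%nat -> (j < n)%nat -> 0 <= W i j) ->
  (forall i, (i < n)%nat -> rsum n (fun j => W i j) = 1) ->
  (forall i, (i < n)%nat -> 0 < Ddiag W alpha d2f x i <= Dmax) ->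
  / Dmax * rsum n (fun a => g a ^ 2) <=
  rsum n (fun a => g a * rsum n (fun j => Hhatinv W alpha d2f x a j * g j)).
Proof. intros Hs Hp Hr HD. set (D := Ddiag W alpha d2f x). set (u := fun i => g i * / D i).
 rewrite (rsum_ext _ (fun a => g a * _) (fun a => g a ^ 2 * / D a + rsum n (fun j => Bmat W a j * u a * u j))).
 2:{ intros a Ha. rewrite <- rsum_scal.
   rewrite (rsum_ext _ _ (fun j => kron a j * (g a * g j * / D a) + Bmat W a j * u a * u j)).
   rewrite rsum_plus, rsum_kron; auto. ring.
   intros j Hj. unfold D. rewrite Hhat_eq by (apply HD; auto). unfold u, D. ring. }
 rewrite rsum_plus. pose proof (Bmat_psd n W u Hs Hp Hr).
 rewrite <- rsum_scal.
 assert (rsum n (fun i => / Dmax * g i ^ 2) <= rsum n (fun a => g a ^ 2 * / D a)).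
 { apply rsum_le; intros i Hi. destruct (HD i Hi). rewrite Rmult_comm. apply Rmult_le_compat_l. apply pow2_ge_0.
   apply Rinv_le_contravar; auto. }
 lra. Qed.

Lemma Bmat_sym n W i j : (i < n)%nat -> (j < n)%nat ->
  (forall i j, (i < n)%nat -> (j < n)%nat -> W i j = W j i) -> Bmat W i j = Bmat W j i.
Proof. intros Hi Hj Hs. rewrite !Bmat_eq. unfold kron. rewrite (Nat.eqb_sym j i).
 destruct (Nat.eqb i j) eqn:E. apply Nat.eqb_eq in E; subst; ring. rewrite (Hs i j); auto; ring. Qed.

Lemma dir_upper n W alpha d2f x g delta Delta m :
  (forall i j, (i < n)%nat -> (j < n)%nat -> W i j = W j i) ->
  (forall i j, (i < n)%nat -> (j < n)%nat -> 0 <= W i j) ->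
  (forall i, (i < n)%nat -> rsum n (fun j => W i j) = 1) ->
  0 < alpha -> 0 < m -> Delta < 1 ->
  (forall i, (i < n)%nat -> delta <= W i i <= Delta) ->
  (forall i, (i < n)%nat -> alpha * m + 2 * (1 - W i i) <= Ddiag W alpha d2f x i) ->
  let rho := 2 * (1 - delta) / (2 * (1 - delta) + alpha * m) in
  let Lam := (1 + rho) / (2 * (1 - Delta) + alpha * m) in
  rsum n (fun a => (rsum n (fun j => Hhatinv W alpha d2f x a j * g j)) ^ 2) <= Lam ^ 2 * rsum n (fun j => g j ^ 2).
Proof. intros Hs Hp Hr Ha Hm HDe Hw HD rho Lam. set (D := Ddiag W alpha d2f x).
 set (Dmin := 2 * (1 - Delta) + alpha * m).
 assert (Hm0 : 0 < alpha * m) by nra.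
 assert (HDmin : 0 < Dmin) by (unfold Dmin; lra).
 assert (HDi : forall i, (i < n)%nat -> Dmin <= D i).
 { intros i Hi. pose proof (HD i Hi). pose proof (Hw i Hi). unfold Dmin, D. lra. }
 assert (HDp : forall i, (i < n)%nat -> 0 < D i) by (intros i Hi; pose proof (HDi i Hi); lra).
 apply schur.
 - intros i j Hi Hj. unfold D in *. rewrite Hhat_eq by auto. pose proof (kron_nonneg i j).
   pose proof (Hw i Hi). pose proof (Bmat_nonneg W i j (Hp i j Hi Hj) ltac:(lra)).
   pose proof (Rinv_0_lt_compat _ (HDp i Hi)). pose proof (Rinv_0_lt_compat _ (HDp j Hj)).
   apply Rplus_le_le_0_compat; apply Rmult_le_pos; try lra. apply Rmult_le_pos; lra.
 - intros i j Hi Hj. unfold D in *. rewrite !Hhat_eq by auto. rewrite kron_sym, (Bmat_sym n W i j); auto.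
   unfold kron. destruct (Nat.eqb j i) eqn:E. apply Nat.eqb_eq in E; subst; ring. ring.
 - intros i Hi. unfold D in *.
   rewrite (rsum_ext _ _ (fun j => kron i j * / D i + Bmat W i j * / D j * / D i)).
   2:{ intros j Hj. rewrite Hhat_eq by auto. unfold D. ring. }
   rewrite rsum_plus, rsum_scalr, rsum_scalr.
   rewrite (rsum_ext _ (fun j => kron i j) (fun j => kron i j * 1)) by (intros; ring).
   rewrite rsum_kron by auto.
   assert (Hb : rsum n (fun j => Bmat W i j * / D j) <= / Dmin * (2 * (1 - W i i))).
   { rewrite <- (Bmat_rowsum n W i Hi (Hr i Hi)), <- rsum_scal. apply rsum_le; intros j Hj.
     rewrite Rmult_comm. apply Rmult_le_compat_r. apply Bmat_nonneg. apply Hp; auto. pose proof (Hw i Hi); lra.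
     apply Rinv_le_contravar; auto. }
   pose proof (HD i Hi) as HDa. fold D in HDa. pose proof (Hw i Hi) as Hwi. pose proof (HDi i Hi).
   set (w := W i i) in *. set (Da := D i) in *.
   assert (HiDa : 0 < / Da) by (apply Rinv_0_lt_compat; lra).
   apply Rle_trans with (1 * / Da + / Dmin * (2 * (1 - w)) * / Da). nra.
   unfold Lam, rho. fold Dmin.
   assert (Hr1 : 2 * (1 - w) <= 2 * (1 - delta) / (2 * (1 - delta) + alpha * m) * Da).
   { apply Rle_trans with (2 * (1 - delta) / (2 * (1 - delta) + alpha * m) * (alpha * m + 2 * (1 - w))).
     unfold Rdiv. apply (Rmult_le_reg_l (2 * (1 - delta) + alpha * m)). lra.
     field_simplify; [|lra]. nra.
     apply Rmult_le_compat_l; auto. unfold Rdiv. apply Rmult_le_pos. lra. apply Rlt_le, Rinv_0_lt_compat; lra. }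
   apply (Rmult_le_reg_l (Da * Dmin)). nra.
   replace (Da * Dmin * (1 * / Da + / Dmin * (2 * (1 - w)) * / Da)) with (Dmin + 2 * (1 - w)) by (field; lra).
   replace (Da * Dmin * ((1 + 2 * (1 - delta) / (2 * (1 - delta) + alpha * m)) / Dmin)) with
     (Da + 2 * (1 - delta) / (2 * (1 - delta) + alpha * m) * Da) by (field; lra).
   assert (Dmin <= Da) by exact H. lra. Qed.


Lemma descent n alpha W delta Delta m M f df d2f xstar eps :
  (1 <= n)%nat -> 0 < alpha ->
  (forall i j, (i < n)%nat -> (j < n)%nat -> W i j = W j i) ->
  (forall i j, (i < n)%nat -> (j < n)%nat -> 0 <= W i j < 1) ->
  (forall i, (i < n)%nat -> rsum n (fun j => W i j) = 1) ->
  0 < delta -> delta <= Delta -> Delta < 1 ->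
  (forall i, (i < n)%nat -> delta <= W i i <= Delta) ->
  (forall i s, (i < n)%nat -> derivable_pt_lim (f i) s (df i s)) ->
  (forall i s, (i < n)%nat -> derivable_pt_lim (df i) s (d2f i s)) ->
  0 < m -> m <= M ->
  (forall i s, (i < n)%nat -> m <= d2f i s <= M) ->
  (forall y, Fobj n W alpha f xstar <= Fobj n W alpha f y) ->
  let rho := 2 * (1 - delta) / (2 * (1 - delta) + alpha * m) in
  let Lam := (1 + rho) / (2 * (1 - Delta) + alpha * m) in
  let lam := / (2 * (1 - delta) + alpha * M) in
  0 < eps -> eps <= 2 * (lam / Lam) ^ 2 ->
  exists r, 0 <= r < 1 /\ forall x,
    rsum n (fun a => Fobj n W alpha f (ann_step n W alpha eps df d2f x a) - Fobj n W alpha f xstar)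
    <= INR n * r * (Fobj n W alpha f x - Fobj n W alpha f xstar).
Proof. intros Hn Ha Hs Hp01 Hr Hd0 HdD HD1 Hw Hf Hdf Hm0 HmM Hb Hstar rho Lam lam He0 He.
 assert (Hp : forall i j, (i < n)%nat -> (j < n)%nat -> 0 <= W i j) by (intros; apply Hp01; auto).
 assert (Hm : forall i s, (i < n)%nat -> m <= d2f i s) by (intros; apply Hb; auto).
 assert (HM : forall i s, (i < n)%nat -> d2f i s <= M) by (intros; apply Hb; auto).
 set (Dmax := 2 * (1 - delta) + alpha * M).
 set (K0 := 1 - delta + alpha * M).
 assert (HaM : 0 < alpha * M) by nra.
 assert (Ham : 0 < alpha * m) by nra.
 assert (HDmax : 0 < Dmax) by (unfold Dmax; lra).
 assert (Hlam : 0 < lam) by (apply Rinv_0_lt_compat; auto).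
 assert (HlK : lam * K0 < 1).
 { unfold lam. fold Dmax. apply (Rmult_lt_reg_l Dmax); auto. rewrite <- Rmult_assoc, Rinv_r by lra. unfold Dmax, K0; lra. }
 assert (HLam : 0 < Lam).
 { unfold Lam, rho. apply Rdiv_lt_0_compat; [|lra]. assert (0 < 2 * (1 - delta) / (2 * (1 - delta) + alpha * m)) by (apply Rdiv_lt_0_compat; lra). lra. }
 set (c := lam * (1 - lam * K0)).
 assert (Hc : 0 < c) by (unfold c; apply Rmult_lt_0_compat; lra).
 assert (HnR : 0 < INR n) by (apply lt_0_INR; lia).
 set (r0 := 1 - eps * c * (2 * (alpha * m)) / INR n).
 exists (Rmax r0 (1/2)). split.
 { split. apply Rle_trans with (1/2); [lra| apply Rmax_r]. apply Rmax_lub_lt; [|lra].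
   unfold r0. assert (0 < eps * c * (2 * (alpha * m)) / INR n). apply Rdiv_lt_0_compat; auto.
   apply Rmult_lt_0_compat; [apply Rmult_lt_0_compat|]; lra. lra. }
 intros x.
 set (g := gradF n W alpha df x). set (G := rsum n (fun j => g j ^ 2)).
 set (d := newton_dir n W alpha df d2f x).
 set (V := Fobj n W alpha f x - Fobj n W alpha f xstar).
 assert (HV : 0 <= V) by (unfold V; pose proof (Hstar x); lra).
 assert (HDx : forall i, (i < n)%nat -> 0 < Ddiag W alpha d2f x i <= Dmax).
 { intros i Hi. pose proof (Hb i (x i) Hi). pose proof (Hw i Hi). unfold Ddiag, Dmax. split; nra. }
 assert (HDl : forall i, (i < n)%nat -> alpha * m + 2 * (1 - W i i) <= Ddiag W alpha d2f x i).
 { intros i Hi. pose proof (Hb i (x i) Hi). unfold Ddiag. nra. }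
 pose proof (dir_lower n W alpha d2f x g Dmax Hs Hp Hr HDx) as Hlow.
 pose proof (dir_upper n W alpha d2f x g delta Delta m Hs Hp Hr Ha Hm0 HD1 Hw HDl) as Hup.
 cbv zeta in Hup. fold rho Lam in Hup. fold G in Hup, Hlow. fold lam Dmax in Hlow.
 change (fun a => rsum n (fun j => Hhatinv W alpha d2f x a j * g j)) with d in Hlow, Hup.
 assert (HPL := PL n W alpha f df d2f m x xstar Hs Hp Hr Ha Hm0 Hf Hdf Hm). fold g G V in HPL.
 assert (H1 : rsum n (fun a => Fobj n W alpha f (ann_step n W alpha eps df d2f x a)) <=
   rsum n (fun a => Fobj n W alpha f x - eps * (g a * d a) + eps ^ 2 * K0 / 2 * d a ^ 2)).
 { apply rsum_le; intros a Ha'. pose proof (step_bound n W alpha eps f df d2f M x a Hs Ha Hf Hdf HM Ha') as Hst.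
   cbv zeta in Hst. fold d g in Hst. eapply Rle_trans; [apply Hst|].
   pose proof (Hw a Ha'). assert (0 <= eps ^ 2 * d a ^ 2) by (apply Rmult_le_pos; apply pow2_ge_0).
   unfold K0. nra. }
 rewrite rsum_plus, rsum_minus, rsum_scal, rsum_scal in H1.
 assert (Hc1 : rsum n (fun _ => Fobj n W alpha f x) = INR n * Fobj n W alpha f x).
 { apply rsum_const. }
 rewrite Hc1 in H1.
 assert (H2 : eps ^ 2 * K0 / 2 * rsum n (fun a => d a ^ 2) <= eps * (lam ^ 2 * K0) * G).
 { assert (HK0 : 0 <= K0) by (unfold K0; lra).
   apply Rle_trans with (eps ^ 2 * K0 / 2 * (Lam ^ 2 * G)).
   apply Rmult_le_compat_l; auto. apply Rmult_le_pos; [|lra]. apply Rmult_le_pos; [apply pow2_ge_0|lra].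
   assert (HG : 0 <= G) by (apply rsum_nonneg; intros; apply pow2_ge_0).
   assert (eps * Lam ^ 2 <= 2 * lam ^ 2).
   { replace (2 * (lam / Lam) ^ 2) with (2 * lam ^ 2 / Lam ^ 2) in He by (field; lra).
     apply (Rmult_le_compat_r (Lam ^ 2)) in He; [|apply pow2_ge_0].
     replace (2 * lam ^ 2 / Lam ^ 2 * Lam ^ 2) with (2 * lam ^ 2) in He by (field; lra). lra. }
   assert (0 <= eps * K0 * G) by (apply Rmult_le_pos; [apply Rmult_le_pos|]; lra).
   replace (eps ^ 2 * K0 / 2 * (Lam ^ 2 * G)) with ((eps * Lam ^ 2) * (eps * K0 * G) / 2) by field.
   replace (eps * (lam ^ 2 * K0) * G) with ((2 * lam ^ 2) * (eps * K0 * G) / 2) by field.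
   apply Rmult_le_compat_r; [lra|]. apply Rmult_le_compat_r; auto. }
 assert (H3 : rsum n (fun a => Fobj n W alpha f (ann_step n W alpha eps df d2f x a)) <= INR n * Fobj n W alpha f x - eps * c * G).
 { assert (eps * (lam * G) <= eps * rsum n (fun a => g a * d a)) by (apply Rmult_le_compat_l; [lra| exact Hlow]).
   unfold c. nra. }
 assert (H4 : 2 * (alpha * m) * V <= G).
 { apply (Rmult_le_reg_l (/ (2 * (alpha * m)))). apply Rinv_0_lt_compat; lra.
   rewrite <- Rmult_assoc, Rinv_l by lra. lra. }
 rewrite rsum_minus.
 assert (Hc2 : rsum n (fun _ => Fobj n W alpha f xstar) = INR n * Fobj n W alpha f xstar).
 { apply rsum_const. }
 rewrite Hc2.
 assert (INR n * r0 * V <= INR n * Rmax r0 (1/2) * V).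
 { apply Rmult_le_compat_r; auto. apply Rmult_le_compat_l; [lra| apply Rmax_l]. }
 assert (INR n * r0 * V = INR n * V - eps * c * (2 * (alpha * m)) * V) by (unfold r0; field; lra).
 assert (eps * c * (2 * (alpha * m) * V) <= eps * c * G) by (apply Rmult_le_compat_l; [apply Rmult_le_pos|]; lra).
 unfold V in *. nra. Qed.

Fixpoint gi (st : (nat -> R) -> nat -> (nat -> R)) (x : nat -> R) (om : nat -> nat) (t : nat) : nat -> R :=
  match t with O => x | S k => st (gi st x om k) (om k) end.

Fixpoint iterD (n : nat) st (x : nat -> R) (t j : nat) : nat -> R :=
  match t with O => x | S t' => iterD n st (st x (j / n ^ t')%nat) t' (j mod n ^ t')%nat end.

Fixpoint code (n : nat) (t : nat) (om : nat -> nat) : nat :=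
  match t with O => O | S t' => (om O * n ^ t' + code n t' (fun k => om (S k)))%nat end.

Fixpoint dig (n : nat) (t j : nat) : list nat :=
  match t with O => nil | S t' => (j / n ^ t')%nat :: dig n t' (j mod n ^ t')%nat end.

Lemma gi_shift st x om t : gi st x om (S t) = gi st (st x (om O)) (fun k => om (S k)) t.
Proof. induction t. reflexivity. change (gi st x om (S (S t))) with (st (gi st x om (S t)) (om (S t))).
 rewrite IHt. reflexivity. Qed.

Lemma pow_pos_nat n t : (1 <= n)%nat -> (n ^ t <> 0)%nat.
Proof. intros H. apply Nat.pow_nonzero. lia. Qed.

Lemma code_lt n t om : (1 <= n)%nat -> (forall k, (om k < n)%nat) -> (code n t om < n ^ t)%nat.
Proof. intros Hn. revert om; induction t; intros om H; simpl. lia.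
 pose proof (IHt (fun k => om (S k)) (fun k => H (S k))). pose proof (H O). nia. Qed.

Lemma divmod_code n t a c : (1 <= n)%nat -> (c < n ^ t)%nat ->
  ((a * n ^ t + c) / n ^ t = a)%nat /\ ((a * n ^ t + c) mod n ^ t = c)%nat.
Proof. intros Hn Hc. pose proof (pow_pos_nat n t Hn). split.
 rewrite Nat.div_add_l by auto. rewrite Nat.div_small by auto. lia.
 rewrite Nat.add_comm, Nat.Div0.mod_add. apply Nat.mod_small; auto. Qed.

Lemma gi_iterD n st x om t : (1 <= n)%nat -> (forall k, (om k < n)%nat) ->
  gi st x om t = iterD n st x t (code n t om).
Proof. intros Hn. revert x om; induction t; intros x om H. reflexivity.
 rewrite gi_shift. simpl. destruct (divmod_code n t (om O) (code n t (fun k => om (S k))) Hn (code_lt n t _ Hn (fun k => H (S k)))) as [E1 E2].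
 rewrite E1, E2. apply IHt. intros; apply H. Qed.

Lemma dig_cyl n t om : (1 <= n)%nat -> (forall k, (om k < n)%nat) -> in_cyl (dig n t (code n t om)) om.
Proof. intros Hn. revert om; induction t; intros om H; unfold in_cyl; simpl. intros; lia.
 destruct (divmod_code n t (om O) (code n t (fun k => om (S k))) Hn (code_lt n t _ Hn (fun k => H (S k)))) as [E1 E2].
 rewrite E1, E2. intros k Hk. destruct k. reflexivity. simpl.
 apply (IHt (fun k => om (S k)) (fun k => H (S k))). simpl in Hk. lia. Qed.

Lemma dig_len n t j : length (dig n t j) = t.
Proof. revert j; induction t; intros; simpl; auto. Qed.

Lemma count_bound n st V r x t : (1 <= n)%nat ->
  (forall y, 0 <= V y) ->
  (forall y, rsum n (fun a => V (st y a)) <= INR n * r * V y) -> 0 <= r ->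
  rsum (n ^ t) (fun j => V (iterD n st x t j)) <= (INR n * r) ^ t * V x.
Proof. intros Hn HV Hst Hr. revert x; induction t; intros x.
 simpl. lra.
 rewrite Nat.pow_succ_r', rsum_mul.
 rewrite (rsum_ext _ _ (fun a => rsum (n ^ t) (fun j => V (iterD n st (st x a) t j)))).
 2:{ intros a Ha. apply rsum_ext. intros j Hj. simpl. destruct (divmod_code n t a j Hn Hj) as [E1 E2]. rewrite E1, E2. auto. }
 apply Rle_trans with (rsum n (fun a => (INR n * r) ^ t * V (st x a))).
 apply rsum_le; intros; auto. rewrite rsum_scal.
 assert (0 <= (INR n * r) ^ t) by (apply pow_le; apply Rmult_le_pos; [apply pos_INR|auto]).
 simpl. specialize (Hst x). nra. Qed.

Fixpoint offs (n T u0 v : nat) : nat :=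
  match v with O => O | S v' => (n ^ (T + u0) + offs n T (S u0) v')%nat end.

Fixpoint decf (n T fuel u k : nat) : nat * nat :=
  match fuel with O => (u, k) | S f =>
    if Nat.ltb k (n ^ (T + u)) then (u, k) else decf n T f (S u) (k - n ^ (T + u))%nat end.

Definition slot n (bad : nat -> nat -> bool) t j : list nat :=
  if bad t j then dig n t j else repeat O (2 * t).

Definition cov n T bad (k : nat) : list nat :=
  let p := decf n T (S k) O k in slot n bad (T + fst p)%nat (snd p).

Lemma decf_offs n T v : forall u0 j fuel, (j < n ^ (T + (u0 + v)))%nat -> (v < fuel)%nat ->
  decf n T fuel u0 (offs n T u0 v + j) = ((u0 + v)%nat, j).
Proof. induction v; intros u0 j fuel Hj Hf; destruct fuel; try lia; simpl.
 - rewrite Nat.add_0_r in *. destruct (Nat.ltb_spec j (n ^ (T + u0))); [f_equal; lia| lia].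
 - destruct (Nat.ltb_spec (n ^ (T + u0) + offs n T (S u0) v + j) (n ^ (T + u0))). lia.
   replace (n ^ (T + u0) + offs n T (S u0) v + j - n ^ (T + u0))%nat with (offs n T (S u0) v + j)%nat by lia.
   rewrite IHv. f_equal; lia. replace (T + (S u0 + v))%nat with (T + (u0 + S v))%nat by lia. auto. lia. Qed.

Lemma offs_ge n T u0 v : (1 <= n)%nat -> (v <= offs n T u0 v)%nat.
Proof. intros Hn. revert u0; induction v; intros; simpl. lia. pose proof (IHv (S u0)).
 pose proof (pow_pos_nat n (T + u0) Hn). lia. Qed.

Lemma offs_back n T v : forall u0, offs n T u0 (S v) = (offs n T u0 v + n ^ (T + (u0 + v)))%nat.
Proof. induction v; intros. simpl. rewrite !Nat.add_0_r. reflexivity.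
 change (offs n T u0 (S (S v))) with (n ^ (T + u0) + offs n T (S u0) (S v))%nat. rewrite (IHv (S u0)).
 change (offs n T u0 (S v)) with (n ^ (T + u0) + offs n T (S u0) v)%nat.
 replace (T + (S u0 + v))%nat with (T + (u0 + S v))%nat by lia. lia. Qed.

Lemma rsum_mono N N' f : (N <= N')%nat -> (forall i, 0 <= f i) -> rsum N f <= rsum N' f.
Proof. intros H Hf. replace N' with (N + (N' - N))%nat by lia. rewrite rsum_add.
 pose proof (rsum_nonneg (N' - N) (fun j => f (N + j)%nat) (fun i _ => Hf _)). lra. Qed.

Lemma cov_mass n T bad U (mass : list nat -> R) : (1 <= n)%nat ->
  rsum (offs n T O U) (fun k => mass (cov n T bad k)) =
  rsum U (fun u => rsum (n ^ (T + u)) (fun j => mass (slot n bad (T + u) j))).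
Proof. intros Hn. induction U. reflexivity. rewrite offs_back, rsum_add, IHU. cbn [rsum]. f_equal.
 apply rsum_ext. intros j Hj. unfold cov. rewrite (decf_offs n T U 0 j). reflexivity. exact Hj.
 pose proof (offs_ge n T 0 U Hn). lia. Qed.

Lemma geom q U : 0 <= q < 1 -> rsum U (fun u => q ^ u) <= / (1 - q).
Proof. intros Hq. assert (rsum U (fun u => q ^ u) * (1 - q) = 1 - q ^ U).
 { induction U; simpl. ring. rewrite Rmult_plus_distr_r, IHU. ring. }
 pose proof (pow_le q U ltac:(lra)).
 apply (Rmult_le_reg_r (1 - q)). lra. rewrite Rinv_l by lra. lra. Qed.

Lemma level_bound n st V r x0 th t (bad : nat -> nat -> bool) : (1 <= n)%nat ->
  (forall y, 0 <= V y) ->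
  (forall y, rsum n (fun a => V (st y a)) <= INR n * r * V y) -> 0 <= r -> 0 < th ->
  (forall j, bad t j = true -> th ^ t < V (iterD n st x0 t j)) ->
  rsum (n ^ t) (fun j => (/ INR n) ^ length (slot n bad t j)) <= (r / th) ^ t * V x0 + (/ INR n) ^ t.
Proof. intros Hn HV Hst Hr Hth Hbad.
 set (p := / INR n). assert (HnR : 0 < INR n) by (apply lt_0_INR; lia).
 assert (Hp : 0 < p) by (apply Rinv_0_lt_compat; auto).
 assert (Hpt : 0 < p ^ t) by (apply pow_lt; auto). assert (Htt : 0 < th ^ t) by (apply pow_lt; auto).
 apply Rle_trans with (rsum (n ^ t) (fun j => p ^ t / th ^ t * V (iterD n st x0 t j) + p ^ t * p ^ t)).
 { apply rsum_le; intros j Hj. unfold slot. destruct (bad t j) eqn:E.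
   - rewrite dig_len. pose proof (Hbad j E).
     assert (p ^ t <= p ^ t / th ^ t * V (iterD n st x0 t j)).
     { unfold Rdiv. rewrite Rmult_assoc. rewrite <- (Rmult_1_r (p ^ t)) at 1. apply Rmult_le_compat_l. lra.
       apply (Rmult_le_reg_l (th ^ t)); auto. rewrite <- Rmult_assoc, Rinv_r by lra. lra. }
     assert (0 <= p ^ t * p ^ t) by nra. lra.
   - rewrite repeat_length. replace (2 * t)%nat with (t + t)%nat by lia. rewrite pow_add.
     assert (0 <= p ^ t / th ^ t * V (iterD n st x0 t j)). { apply Rmult_le_pos. unfold Rdiv. apply Rmult_le_pos. lra. apply Rlt_le, Rinv_0_lt_compat; auto. auto. }
     lra. }
 rewrite rsum_plus, rsum_scal, rsum_const, pow_INR.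
 pose proof (count_bound n st V r x0 t Hn HV Hst Hr).
 assert (Hnp : INR n * p = 1) by (unfold p; field; lra).
 assert (E1 : p ^ t / th ^ t * ((INR n * r) ^ t * V x0) = (r / th) ^ t * V x0).
 { assert (Hr' : p * (INR n * r) = r) by (unfold p; field; lra).
   unfold Rdiv. rewrite (Rpow_mult_distr r (/ th)), pow_inv.
   replace (p ^ t * / th ^ t * ((INR n * r) ^ t * V x0)) with ((p * (INR n * r)) ^ t * / th ^ t * V x0) by (rewrite Rpow_mult_distr; ring).
   rewrite Hr'. ring. }
 assert (E2 : INR n ^ t * (p ^ t * p ^ t) = p ^ t).
 { rewrite <- Rmult_assoc, <- Rpow_mult_distr, Hnp, pow1. ring. }
 rewrite E2. assert (0 <= p ^ t / th ^ t) by (unfold Rdiv; apply Rmult_le_pos; [lra| apply Rlt_le, Rinv_0_lt_compat; auto]).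
 apply Rplus_le_compat_r. rewrite <- E1. apply Rmult_le_compat_l; auto. Qed.

Lemma as_conv n st Fv Fs r x0 :
  (2 <= n)%nat -> (forall y, Fs <= Fv y) -> 0 <= r < 1 ->
  (forall y, rsum n (fun a => Fv (st y a) - Fs) <= INR n * r * (Fv y - Fs)) ->
  unif_null n (fun om => ~ Un_cv (fun t => Fv (gi st x0 om t)) Fs).
Proof. intros Hn2 HFs Hr Hst e He.
 assert (Hn : (1 <= n)%nat) by lia.
 set (V := fun y => Fv y - Fs).
 assert (HV : forall y, 0 <= V y) by (intros y; unfold V; pose proof (HFs y); lra).
 set (th := (1 + r) / 2). assert (Hth : 0 < th < 1) by (unfold th; lra).
 set (q := r / th). assert (Hq : 0 <= q < 1).
 { unfold q, th. split. apply Rmult_le_pos; [lra| apply Rlt_le, Rinv_0_lt_compat; lra].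
   apply (Rmult_lt_reg_r ((1 + r) / 2)). lra. unfold Rdiv. rewrite Rmult_assoc, Rinv_l by lra. lra. }
 set (p := / INR n). assert (HnR : 2 <= INR n) by (replace 2 with (INR 2) by (simpl; ring); apply le_INR; auto).
 assert (Hp : 0 < p <= / 2) by (unfold p; split; [apply Rinv_0_lt_compat; lra| apply Rinv_le_contravar; lra]).
 set (V0 := V x0).
 destruct (pow_lt_1_zero q ltac:(rewrite Rabs_pos_eq; lra) (e * (1 - q) / (2 * (V0 + 1)))) as [T1 HT1].
 { pose proof (HV x0). apply Rdiv_lt_0_compat; [apply Rmult_lt_0_compat|]; unfold V0; lra. }
 destruct (pow_lt_1_zero p ltac:(rewrite Rabs_pos_eq; lra) (e * (1 - p) / 2)) as [T2 HT2].
 { apply Rdiv_lt_0_compat; [apply Rmult_lt_0_compat|]; lra. }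
 set (T := Nat.max T1 T2).
 set (bad := fun t j => if Rlt_dec (th ^ t) (V (iterD n st x0 t j)) then true else false).
 exists (cov n T bad). split.
 - intros om Hom Hnc.
   assert (Hex : exists t, (T <= t)%nat /\ th ^ t < V (gi st x0 om t)).
   { apply NNPP. intros Hno. apply Hnc. intros eps0 Heps.
     destruct (pow_lt_1_zero th ltac:(rewrite Rabs_pos_eq; lra) eps0 Heps) as [N HN].
     exists (Nat.max N T). intros t Ht. unfold R_dist.
     assert (V (gi st x0 om t) <= th ^ t).
     { apply Rnot_lt_le. intros Hlt. apply Hno. exists t. split; auto. lia. }
     specialize (HN t ltac:(lia)). rewrite Rabs_pos_eq in HN by (apply pow_le; lra).
     rewrite Rabs_pos_eq by (apply HV). unfold V in H. lra. }
   destruct Hex as [t [Ht Hbt]].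
   set (u := (t - T)%nat). set (j := code n t om).
   exists (offs n T 0 u + j)%nat. unfold cov.
   assert (Htu : (T + (0 + u))%nat = t) by (unfold u; lia).
   rewrite (decf_offs n T u 0 j). simpl fst; simpl snd.
   2:{ rewrite Htu. apply code_lt; auto. }
   2:{ pose proof (offs_ge n T 0 u Hn). lia. }
   replace (T + u)%nat with t by (unfold u; lia). unfold slot, bad.
   unfold j. rewrite <- (gi_iterD n st x0 om t Hn Hom).
   destruct (Rlt_dec (th ^ t) (V (gi st x0 om t))); [|contradiction].
   apply dig_cyl; auto.
 - intros N. fold p.
   apply Rle_trans with (rsum (offs n T 0 N) (fun k => p ^ length (cov n T bad k))).
   { apply rsum_mono. apply offs_ge; auto. intros; apply pow_le; lra. }
   rewrite (cov_mass n T bad N (fun l => p ^ length l) Hn).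
   apply Rle_trans with (rsum N (fun u => (q ^ T * V0) * q ^ u + p ^ T * p ^ u)).
   { apply rsum_le; intros u Hu.
     assert (HB : forall j0, bad (T + u)%nat j0 = true -> th ^ (T + u) < V (iterD n st x0 (T + u) j0)).
     { intros j0 Hj0. unfold bad in Hj0. destruct (Rlt_dec _ _); [auto| discriminate]. }
     eapply Rle_trans. apply (level_bound n st V r x0 th (T + u) bad Hn HV (fun y => Hst y) ltac:(lra) ltac:(lra) HB).
     right. fold p q V0. rewrite !pow_add. ring. }
   rewrite rsum_plus, rsum_scal, rsum_scal.
   pose proof (geom q N Hq). pose proof (geom p N ltac:(lra)).
   specialize (HT1 T ltac:(unfold T; lia)). specialize (HT2 T ltac:(unfold T; lia)).
   rewrite Rabs_pos_eq in HT1 by (apply pow_le; lra). rewrite Rabs_pos_eq in HT2 by (apply pow_le; lra).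
   assert (HV0 : 0 <= V0) by apply HV.
   assert (Hqt : 0 <= q ^ T) by (apply pow_le; lra). assert (Hpt : 0 <= p ^ T) by (apply pow_le; lra).
   assert (A1 : q ^ T * V0 * rsum N (fun u => q ^ u) <= e / 2).
   { apply Rle_trans with (q ^ T * V0 * / (1 - q)). apply Rmult_le_compat_l; auto. apply Rmult_le_pos; auto.
     apply Rle_trans with (e * (1 - q) / (2 * (V0 + 1)) * V0 * / (1 - q)).
     apply Rmult_le_compat_r. apply Rlt_le, Rinv_0_lt_compat; lra. apply Rmult_le_compat_r; lra.
     replace (e * (1 - q) / (2 * (V0 + 1)) * V0 * / (1 - q)) with (e / 2 * (V0 / (V0 + 1))) by (field; lra).
     assert (V0 / (V0 + 1) <= 1). { apply (Rmult_le_reg_r (V0 + 1)). lra. unfold Rdiv. rewrite Rmult_assoc, Rinv_l by lra. lra. }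
     nra. }
   assert (A2 : p ^ T * rsum N (fun u => p ^ u) <= e / 2).
   { apply Rle_trans with (p ^ T * / (1 - p)). apply Rmult_le_compat_l; auto.
     apply Rle_trans with (e * (1 - p) / 2 * / (1 - p)). apply Rmult_le_compat_r. apply Rlt_le, Rinv_0_lt_compat; lra. lra.
     right. field. lra. }
   change (pow q) with (fun u => q ^ u). change (pow p) with (fun u => p ^ u). lra. Qed.

Lemma ann_gi n W alpha eps df d2f x0 om t :
  ann_iter n W alpha eps df d2f x0 om t = gi (fun y a => ann_step n W alpha eps df d2f y a) x0 om t.
Proof. induction t; simpl; auto. rewrite IHt. auto. Qed.

Theorem theorem4p4
  (n : nat) (alpha : R) (W : nat -> nat -> R)
  (delta Delta m M L : R)
  (f df d2f : nat -> R -> R)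
  (x0 xstar : nat -> R) (eps : R) :
  (1 <= n)%nat ->
  0 < alpha ->
  (forall i j, (i < n)%nat -> (j < n)%nat -> W i j = W j i) ->
  (forall i j, (i < n)%nat -> (j < n)%nat -> 0 <= W i j < 1) ->
  (forall i, (i < n)%nat -> rsum n (fun j => W i j) = 1) ->
  (forall v : nat -> R, (forall i, (i < n)%nat -> lapl n W v i = 0) ->
     exists c, forall i, (i < n)%nat -> v i = c) ->
  0 < delta -> delta <= Delta -> Delta < 1 ->
  (forall i, (i < n)%nat -> delta <= W i i <= Delta) ->
  (forall i s, (i < n)%nat -> derivable_pt_lim (f i) s (df i s)) ->
  (forall i s, (i < n)%nat -> derivable_pt_lim (df i) s (d2f i s)) ->
  (forall i s, (i < n)%nat -> continuity_pt (d2f i) s) ->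
  0 < m -> m <= M ->
  (forall i s, (i < n)%nat -> m <= d2f i s <= M) ->
  (forall i a b, (i < n)%nat -> Rabs (d2f i a - d2f i b) <= L * Rabs (a - b)) ->
  (forall y, Fobj n W alpha f xstar <= Fobj n W alpha f y) ->
  let rho := 2 * (1 - delta) / (2 * (1 - delta) + alpha * m) in
  let Lam := (1 + rho) / (2 * (1 - Delta) + alpha * m) in
  let lam := / (2 * (1 - delta) + alpha * M) in
  0 < eps -> eps <= 2 * (lam / Lam) ^ 2 ->
  almost_surely n (fun omega =>
    Un_cv (fun t => Fobj n W alpha f (ann_iter n W alpha eps df d2f x0 omega t))
          (Fobj n W alpha f xstar)).
Proof. intros Hn Ha Hs Hp Hr Hnull Hd0 HdD HD1 Hw Hf Hdf Hc Hm0 HmM Hb HL Hstar rho Lam lam He0 He.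
 destruct (descent n alpha W delta Delta m M f df d2f xstar eps Hn Ha Hs Hp Hr Hd0 HdD HD1 Hw Hf Hdf Hm0 HmM Hb Hstar He0 He) as [r [Hr01 Hdesc]].
 assert (Hn2 : (2 <= n)%nat).
 { destruct (Nat.eq_dec n 1) as [E|E]; [|lia]. subst. specialize (Hr O ltac:(lia)). simpl in Hr.
   pose proof (Hw O ltac:(lia)). lra. }
 pose proof (as_conv n (fun y a => ann_step n W alpha eps df d2f y a) (Fobj n W alpha f) (Fobj n W alpha f xstar) r x0 Hn2 Hstar Hr01 Hdesc) as H.
 unfold almost_surely. intros e He'. destruct (H e He') as [c [Hc1 Hc2]]. exists c. split; auto.
 intros om Hom Hnc. apply Hc1; auto. intros Hcv. apply Hnc.
 replace (fun t => Fobj n W alpha f (ann_iter n W alpha eps df d2f x0 om t)) with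
   (fun t => Fobj n W alpha f (gi (fun y a => ann_step n W alpha eps df d2f y a) x0 om t)); auto.
 apply functional_extensionality; intros t. rewrite ann_gi. auto. Qed.
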